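(* Fix $a, b > 0$, $\delta_1, \delta_2 > 0$, $0 < x < 1$, and $\varepsilon_{2,1}, \varepsilon_{2,2} > 0$. Let $l_1$ be a positive integer such that $$1 - e^{-\delta_2}\sum_{l=0}^{l_1-1}\frac{\delta_2^l}{l!} < \varepsilon_{2,1}.$$ For each $l = 0, 1, \dots, l_1-1$, let $m_l$ be a nonnegative integer such that $$e^{-\delta_2}\frac{\delta_2^l}{l!}\Big(1 - e^{-\delta_1}\sum_{j=0}^{m_l-1}\frac{\delta_1^j}{j!}\Big) < \varepsilon_{2,2}.$$ Define the truncated sum $\hat B = \sum_{l=0}^{l_1-1}\sum_{j=0}^{m_l-1} L_{j,l}$. Define $$U2_{a,b}^{\delta_1,\delta_2}(x) = 1 - e^{-(\delta_1+\delta_2)}\sum_{l=0}^{l_1-1}\frac{\delta_2^l}{l!}\sum_{j=0}^{m_l-1}\frac{\delta_1^j}{j!}.$$ Then $$B_{a,b}^{\delta_1,\delta_2}(x) - \hat B < U2_{a,b}^{\delta_1,\delta_2}(x) < \varepsilon_{2,1} + l_1\varepsilon_{2,2}.$$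
   Context: For $p, q > 0$, $I_x(p,q) = \frac{\int_0^x t^{p-1}(1-t)^{q-1}\,dt}{B(p,q)}$ is the regularized incomplete beta function, where $B(p,q) = \Gamma(p)\Gamma(q)/\Gamma(p+q)$. The CDF of the doubly non-central beta distribution with parameters $a, b$ and $\delta_1, \delta_2$ is $$B_{a,b}^{\delta_1,\delta_2}(x) = \sum_{j=0}^\infty\sum_{l=0}^\infty L_{j,l}, \qquad L_{j,l} = e^{-(\delta_1+\delta_2)}\frac{\delta_1^j\delta_2^l}{j!\,l!}\,I_x(j+a, l+b).$$ Empty sums are zero. *)

(* Defs.v *)
From Stdlib Require Import Reals Arith Factorial.
From Coquelicot Require Import Coquelicot.
Open Scope R_scope.

Fixpoint fsum (n : nat) (f : nat -> R) : R :=
  match n with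
  | O => 0
  | S n' => fsum n' f + f n'
  end.

Definition Gamma (s : R) : R :=
  RInt_gen (fun t => Rpower t (s - 1) * exp (- t)) (at_right 0) (Rbar_locally p_infty).

Definition Beta (p q : R) : R := Gamma p * Gamma q / Gamma (p + q).

(* regularized incomplete beta I_x(p,q) = (int_0^x t^(p-1)(1-t)^(q-1) dt) / B(p,q),
   the integral being improper at 0 (integrand may be singular there) *)
Definition Ireg (x p q : R) : R :=
  RInt_gen (fun t => Rpower t (p - 1) * Rpower (1 - t) (q - 1)) (at_right 0) (at_point x)
  / Beta p q.

Definition Lterm (a b d1 d2 x : R) (j l : nat) : R :=
  exp (- (d1 + d2)) * (d1 ^ j * d2 ^ l) / (INR (fact j) * INR (fact l))
  * Ireg x (INR j + a) (INR l + b).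

Definition dncbeta_cdf (a b d1 d2 x : R) : R :=
  Series (fun j => Series (fun l => Lterm a b d1 d2 x j l)).

(* Main.v *)
Require Import Defs.
From Stdlib Require Import Reals Arith Factorial.
From Coquelicot Require Import Coquelicot.
From Stdlib Require Import Lra Lia Classical.
Open Scope R_scope.

Lemma cont_of_eps (f : R -> R) x :
  (forall eps : posreal, exists d : posreal, forall y, Rabs (y - x) < d -> Rabs (f y - f x) < eps) ->
  continuous f x.
Proof.
intros H. apply continuity_pt_filterlim.
intros eps He. destruct (H (mkposreal eps He)) as [d Hd].
exists d. split; [apply cond_pos|]. intros y [_ Hy]. apply Hd. exact Hy.
Qed.

Lemma eps_of_cont (f : R -> R) x : continuous f x ->
  forall eps : posreal, exists d : posreal, forall y, Rabs (y - x) < d -> Rabs (f y - f x) < eps.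
Proof.
intros H eps. apply continuity_pt_filterlim in H.
destruct (H eps (cond_pos eps)) as [d [Hd H']].
exists (mkposreal d Hd). intros y Hy. simpl in Hy.
destruct (Req_dec y x) as [->|Hne].
- rewrite Rminus_eq_0, Rabs_R0. apply cond_pos.
- apply H'. split; [split; [exact I| auto]| exact Hy].
Qed.

Lemma cont2d_fst f x y : continuity_2d_pt f x y -> continuous (fun u => f u y) x.
Proof.
intros H. apply cont_of_eps. intros eps. destruct (H eps) as [d Hd].
exists d. intros u Hu. apply Hd; auto. rewrite Rminus_eq_0, Rabs_R0. apply cond_pos.
Qed.

Lemma cont2d_snd f x y : continuity_2d_pt f x y -> continuous (fun v => f x v) y.
Proof.
intros H. apply cont_of_eps. intros eps. destruct (H eps) as [d Hd].
exists d. intros u Hu. apply Hd; auto. rewrite Rminus_eq_0, Rabs_R0. apply cond_pos.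
Qed.

Lemma cont2d_swap f x y : continuity_2d_pt f x y -> continuity_2d_pt (fun u v => f v u) y x.
Proof.
intros H eps. destruct (H eps) as [d Hd]. exists d. intros u v Hu Hv. apply Hd; auto.
Qed.

Lemma param_cont_le (g : R -> R -> R) a b y0 : a <= b ->
  (forall x y, continuity_2d_pt g x y) -> continuous (fun y => RInt (fun x => g x y) a b) y0.
Proof.
intros Hab Hg. apply cont_of_eps. intros eps.
assert (Hp : 0 < eps / (b - a + 1)) by (apply Rdiv_lt_0_compat; [apply cond_pos| lra]).
destruct (uniform_continuity_2d_1d g a b y0 (fun x _ => Hg x y0) (mkposreal _ Hp)) as [d Hd].
exists d. intros y Hy.
assert (Hex : forall v, ex_RInt (fun x => g x v) a b).
{ intros v. apply (ex_RInt_continuous (V:=R_CompleteNormedModule)). intros z _. apply cont2d_fst, Hg. }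
assert (E : RInt (fun x => g x y - g x y0) a b = RInt (fun x => g x y) a b - RInt (fun x => g x y0) a b)
  by (apply (RInt_minus (V:=R_CompleteNormedModule) (fun x => g x y) (fun x => g x y0) a b (Hex y) (Hex y0))).
rewrite <- E.
eapply Rle_lt_trans.
{ apply (abs_RInt_le_const _ a b (eps / (b - a + 1))); auto.
  - apply (ex_RInt_minus (V:=R_NormedModule)); auto.
  - intros t Ht. apply Rlt_le.
    assert (Hy' : Rabs (y - y0) < d) by exact Hy.
    pose proof (Hd t y0 t y Ht ltac:(pose proof (cond_pos d); lra) Ht
       ltac:(apply Rabs_lt_between' in Hy'; lra) ltac:(rewrite Rminus_eq_0, Rabs_R0; apply cond_pos)) as HH.
    exact HH. }
simpl. apply Rle_lt_trans with (eps * ((b - a) / (b - a + 1))).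
{ right. field. lra. }
pose proof (cond_pos eps).
assert ((b - a) / (b - a + 1) < 1).
{ apply (Rmult_lt_reg_r (b - a + 1)); [lra|]. unfold Rdiv. rewrite Rmult_assoc, Rinv_l; lra. }
assert (0 <= (b - a) / (b - a + 1)) by (apply Rle_div_r; lra || (apply Rdiv_le_0_compat; lra)).
nra.
Qed.

Lemma param_cont (g : R -> R -> R) a b y0 :
  (forall x y, continuity_2d_pt g x y) -> continuous (fun y => RInt (fun x => g x y) a b) y0.
Proof.
intros Hg. destruct (Rle_dec a b) as [Hab|Hab].
- apply param_cont_le; auto.
- apply (continuous_ext (fun y => opp (RInt (fun x => g x y) b a))).
  + intros y. rewrite opp_RInt_swap; auto.
    apply (ex_RInt_continuous (V:=R_CompleteNormedModule)). intros z _. apply cont2d_fst, Hg.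
  + apply cont_of_eps. intros eps.
    destruct (eps_of_cont _ _ (param_cont_le g b a y0 ltac:(lra) Hg) eps) as [d Hd].
    exists d. intros y Hy. unfold opp; simpl. rewrite <- Rabs_Ropp.
    replace (- (- RInt (fun x : R => g x y) b a - - RInt (fun x : R => g x y0) b a)) with
      (RInt (fun x : R => g x y) b a - RInt (fun x : R => g x y0) b a) by ring. auto.
Qed.

Lemma fubini_glob (f : R -> R -> R) a b c d :
  (forall x y, continuity_2d_pt f x y) ->
  RInt (fun x => RInt (fun y => f x y) c d) a b = RInt (fun y => RInt (fun x => f x y) a b) c d.
Proof.
intros Hf.
set (Phi z := RInt (fun y => RInt (fun x => f x y) a z) c d).
assert (HF : forall t z, is_derive (fun u => RInt (fun x => f x t) a u) z (f z t)).
{ intros t z. apply (is_derive_RInt (V:=R_NormedModule) (fun x => f x t) _ a).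
  - apply filter_forall. intros b0. apply (RInt_correct (V:=R_CompleteNormedModule)). apply (ex_RInt_continuous (V:=R_CompleteNormedModule)).
    intros w _. apply cont2d_fst, Hf.
  - apply cont2d_fst, Hf. }
assert (Hd : forall z, is_derive Phi z (RInt (fun y => f z y) c d)).
{ intros z.
  assert (H := is_derive_RInt_param (fun z y => RInt (fun x => f x y) a z) c d z).
  rewrite (RInt_ext (fun t => Derive (fun u => RInt (fun x => f x t) a u) z) (fun y => f z y)) in H.
  2: { intros t _. apply is_derive_unique, HF. }
  apply H.
  - apply filter_forall. intros z0 t _. eexists. apply HF.
  - intros t _. apply continuity_2d_pt_ext with (f := f).
    + intros; symmetry; apply is_derive_unique, HF.
    + apply Hf.
  - apply filter_forall. intros z0. apply (ex_RInt_continuous (V:=R_CompleteNormedModule)). intros w _.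
    apply (param_cont f a z0 w Hf). }
assert (Hc : forall z, continuous (fun z => RInt (fun y => f z y) c d) z).
{ intros z. apply (param_cont (fun y z => f z y) c d z).
  intros x y. apply cont2d_swap, Hf. }
pose proof (is_RInt_derive Phi (fun z => RInt (fun y => f z y) c d) a b
  (fun z _ => Hd z) (fun z _ => Hc z)) as HR.
apply is_RInt_unique in HR. rewrite HR.
unfold Phi. rewrite (RInt_ext (fun y => RInt (fun x => f x y) a a) (fun _ => 0)).
2: { intros; apply (RInt_point (V:=R_CompleteNormedModule)). }
rewrite RInt_const. unfold minus, plus, opp, scal; simpl. unfold mult; simpl. ring.
Qed.

Definition clamp (lo hi x : R) := Rmax lo (Rmin hi x).

Lemma clamp_lip lo hi x y : Rabs (clamp lo hi x - clamp lo hi y) <= Rabs (x - y).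
Proof.
unfold clamp, Rmax, Rmin.
repeat (destruct Rle_dec); repeat (destruct Rle_dec);
  unfold Rabs; repeat destruct Rcase_abs; lra.
Qed.

Lemma clamp_id lo hi x : lo <= x <= hi -> clamp lo hi x = x.
Proof. intros. unfold clamp, Rmax, Rmin. repeat destruct Rle_dec; lra. Qed.

Lemma clamp_in lo hi x : lo <= hi -> lo <= clamp lo hi x <= hi.
Proof. intros. unfold clamp, Rmax, Rmin. repeat destruct Rle_dec; lra. Qed.

Lemma fubini_rect (f : R -> R -> R) a b c d : a <= b -> c <= d ->
  (forall x y, a <= x <= b -> c <= y <= d -> continuity_2d_pt f x y) ->
  RInt (fun x => RInt (fun y => f x y) c d) a b = RInt (fun y => RInt (fun x => f x y) a b) c d.
Proof.
intros Hab Hcd Hf.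
set (g x y := f (clamp a b x) (clamp c d y)).
assert (Hg : forall x y, continuity_2d_pt g x y).
{ intros x y eps.
  destruct (Hf (clamp a b x) (clamp c d y) (clamp_in _ _ _ Hab) (clamp_in _ _ _ Hcd) eps) as [del Hd].
  exists del. intros u v Hu Hv. unfold g. apply Hd.
  - eapply Rle_lt_trans; [apply clamp_lip| exact Hu].
  - eapply Rle_lt_trans; [apply clamp_lip| exact Hv]. }
pose proof (fubini_glob g a b c d Hg) as E.
rewrite (RInt_ext (fun x => RInt (fun y => f x y) c d) (fun x => RInt (fun y => g x y) c d)).
rewrite (RInt_ext (fun y => RInt (fun x => f x y) a b) (fun y => RInt (fun x => g x y) a b)).
exact E.
- intros y Hy. rewrite Rmin_left in Hy by lra. rewrite Rmax_right in Hy by lra.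
  apply RInt_ext. intros x Hx. rewrite Rmin_left in Hx by lra. rewrite Rmax_right in Hx by lra.
  unfold g. rewrite !clamp_id by lra. reflexivity.
- intros x Hx. rewrite Rmin_left in Hx by lra. rewrite Rmax_right in Hx by lra.
  apply RInt_ext. intros y Hy. rewrite Rmin_left in Hy by lra. rewrite Rmax_right in Hy by lra.
  unfold g. rewrite !clamp_id by lra. reflexivity.
Qed.

Lemma exRc (f : R -> R) a b : (forall x, Rmin a b <= x <= Rmax a b -> continuous f x) -> ex_RInt f a b.
Proof. intros H. apply (ex_RInt_continuous (V:=R_CompleteNormedModule)). exact H. Qed.

Lemma RInt_mono_int (f : R -> R) a a0 b0 b : a <= a0 -> a0 <= b0 -> b0 <= b ->
  (forall x, a <= x <= b -> continuous f x) -> (forall x, a < x < b -> 0 <= f x) ->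
  RInt f a0 b0 <= RInt f a b.
Proof.
intros H1 H2 H3 Hc Hp.
assert (E1 : forall u v, a <= u -> u <= v -> v <= b -> ex_RInt f u v).
{ intros u v Hu Huv Hv. apply exRc. intros x Hx. rewrite Rmin_left in Hx by lra.
  rewrite Rmax_right in Hx by lra. apply Hc; lra. }
assert (R1 : RInt f a b = RInt f a a0 + RInt f a0 b0 + RInt f b0 b).
{ rewrite <- (RInt_Chasles (V:=R_CompleteNormedModule) f a a0 b) by (apply E1; lra).
  rewrite <- (RInt_Chasles (V:=R_CompleteNormedModule) f a0 b0 b) by (apply E1; lra).
  unfold plus; simpl. ring. }
rewrite R1.
assert (0 <= RInt f a a0) by (apply RInt_ge_0; auto; [apply E1; lra| intros; apply Hp; lra]).
assert (0 <= RInt f b0 b) by (apply RInt_ge_0; auto; [apply E1; lra| intros; apply Hp; lra]).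
lra.
Qed.

Lemma lub_ex (E : R -> Prop) M : (exists y, E y) -> (forall y, E y -> y <= M) ->
  exists L, (forall y, E y -> y <= L) /\ (forall e, 0 < e -> exists y, E y /\ L - e < y).
Proof.
intros Hne Hb.
destruct (completeness E) as [L [HL1 HL2]].
{ exists M. intros y Hy. apply Hb, Hy. }
{ exact Hne. }
exists L. split; [exact HL1|].
intros e He. apply NNPP. intros Hn.
assert (L <= L - e); [|lra].
apply HL2. intros y Hy. apply Rnot_lt_le. intros Hlt. apply Hn. exists y. split; auto.
Qed.

Lemma sup_gen (f : R -> R) (Fa Fb : (R -> Prop) -> Prop) (FFa : Filter Fa) (FFb : Filter Fb)
  (D : R -> R -> Prop) L :
  (forall a b, D a b -> ex_RInt f a b) ->
  (forall a b, D a b -> RInt f a b <= L) ->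
  (forall e, 0 < e -> exists a b, D a b /\ L - e < RInt f a b) ->
  (forall a0 b0, D a0 b0 -> filter_prod Fa Fb
      (fun ab => D (fst ab) (snd ab) /\ RInt f a0 b0 <= RInt f (fst ab) (snd ab))) ->
  is_RInt_gen f Fa Fb L.
Proof.
intros Hex Hle Happ Hev P [eps HP].
destruct (Happ eps (cond_pos eps)) as [a0 [b0 [HD Hlt]]].
unfold filtermapi.
apply (filter_imp (F := filter_prod Fa Fb) _ _ ) with (2 := Hev a0 b0 HD).
intros [a b] [HD' Hab]. simpl in *.
exists (RInt f a b). split.
- apply (RInt_correct (V:=R_CompleteNormedModule)). apply Hex, HD'.
- apply HP. unfold ball; simpl. unfold AbsRing_ball, abs, minus, plus, opp; simpl.
  specialize (Hle a b HD'). unfold Rabs; destruct Rcase_abs; lra.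
Qed.

Definition gam (s t : R) := Rpower t (s - 1) * exp (- t).
Definition bet (p q t : R) := Rpower t (p - 1) * Rpower (1 - t) (q - 1).

Lemma exd_cont (f : R -> R) x : ex_derive f x -> continuous f x.
Proof. intros H. exact (ex_derive_continuous (K:=R_AbsRing) (V:=R_NormedModule) f x H). Qed.

Lemma ex_der_Rpower c t : 0 < t -> ex_derive (fun x => Rpower x c) t.
Proof. intros H. exists (c * Rpower t (c - 1)). apply is_derive_Reals, derivable_pt_lim_power, H. Qed.

Lemma cont_Rpower c t : 0 < t -> continuous (fun x => Rpower x c) t.
Proof. intros H. apply (exd_cont (fun x => Rpower x c) t). apply ex_der_Rpower, H. Qed.

Lemma cont_gam s t : 0 < t -> continuous (gam s) t.
Proof.
intros H. apply exd_cont. unfold gam. auto_derive.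
apply ex_der_Rpower, H.
Qed.

Lemma cont_bet p q t : 0 < t < 1 -> continuous (bet p q) t.
Proof.
intros H. apply exd_cont. unfold bet. auto_derive. repeat split; auto;
apply ex_der_Rpower; lra.
Qed.

Lemma Rpower_pos x c : 0 < Rpower x c.
Proof. unfold Rpower. apply exp_pos. Qed.

Lemma gam_pos s t : 0 < gam s t.
Proof. unfold gam. apply Rmult_lt_0_compat; [apply Rpower_pos| apply exp_pos]. Qed.

Lemma bet_pos p q t : 0 < bet p q t.
Proof. unfold bet. apply Rmult_lt_0_compat; apply Rpower_pos. Qed.

Lemma int_pow c a b : 0 < c -> 0 < a -> a <= b ->
  RInt (fun t => Rpower t (c - 1)) a b = (Rpower b c - Rpower a c) / c.
Proof.
intros Hc Ha Hab.
apply is_RInt_unique.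
assert (H := is_RInt_derive (V:=R_CompleteNormedModule) (fun t => Rpower t c / c) (fun t => Rpower t (c - 1)) a b).
replace ((Rpower b c - Rpower a c) / c) with (minus (Rpower b c / c) (Rpower a c / c)).
2: { unfold minus, plus, opp; simpl. field. lra. }
apply H.
- intros x Hx. rewrite Rmin_left in Hx by lra.
  replace (Rpower x (c - 1)) with (/ c * (c * Rpower x (c - 1))) by (field; lra).
  apply is_derive_Reals.
  apply (derivable_pt_lim_ext (fun t => / c * Rpower t c)). { intros; unfold Rdiv; ring. }
  apply derivable_pt_lim_scal, derivable_pt_lim_power. lra.
- intros x Hx. rewrite Rmin_left in Hx by lra. apply cont_Rpower. lra.
Qed.

Lemma exp_mono x y : x <= y -> exp x <= exp y.
Proof. intros [H|H]; [left; apply exp_increasing, H| subst; right; reflexivity]. Qed.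

Lemma Rpower_one c : Rpower 1 c = 1.
Proof. unfold Rpower. rewrite ln_1, Rmult_0_r, exp_0. reflexivity. Qed.

Lemma gam_le_small s t : 0 < t -> t <= 1 -> gam s t <= Rpower t (s - 1).
Proof.
intros H1 H2. unfold gam. pose proof (Rpower_pos t (s - 1)).
assert (exp (- t) <= 1) by (rewrite <- exp_0; apply exp_mono; lra). nra.
Qed.

Lemma taylor_last x n : 0 <= x -> x ^ n / INR (fact n) <= exp x.
Proof.
intros Hx. eapply Rle_trans; [|apply (exp_ge_taylor x n), Hx].
destruct n as [|m].
- simpl. right. reflexivity.
- rewrite tech5.
  assert (0 <= sum_f_R0 (fun k => x ^ k / INR (fact k)) m).
  { apply cond_pos_sum. intros k. apply Rdiv_le_0_compat; [apply pow_le, Hx| apply lt_0_INR, lt_O_fact]. }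
  lra.
Qed.

Lemma gam_le_big s n t : s - 1 <= INR n -> 1 <= t ->
  gam s t <= INR (fact n) * 2 ^ n * exp (- t / 2).
Proof.
intros Hn Ht. unfold gam.
assert (H1 : Rpower t (s - 1) <= t ^ n).
{ rewrite <- Rpower_pow by lra. apply Rle_Rpower; lra. }
assert (Hf : 0 < INR (fact n)) by apply lt_0_INR, lt_O_fact.
assert (H2 : (t / 2) ^ n / INR (fact n) <= exp (t / 2)) by (apply taylor_last; lra).
assert (H3 : t ^ n <= INR (fact n) * 2 ^ n * exp (t / 2)).
{ replace (t ^ n) with (2 ^ n * ((t / 2) ^ n / INR (fact n)) * INR (fact n)).
  2: { assert (Et : t ^ n = (2 * (t / 2)) ^ n) by (f_equal; field).
       rewrite Et, Rpow_mult_distr. field. lra. }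
  pose proof (pow_lt 2 n ltac:(lra)).
  replace (INR (fact n) * 2 ^ n * exp (t / 2)) with ((2 ^ n * INR (fact n)) * exp (t / 2)) by ring.
  replace (2 ^ n * ((t / 2) ^ n / INR (fact n)) * INR (fact n)) with ((2 ^ n * INR (fact n)) * ((t / 2) ^ n / INR (fact n))) by ring.
  apply Rmult_le_compat_l; [nra| exact H2]. }
assert (E : exp (t / 2) * exp (- t) = exp (- t / 2)).
{ rewrite <- exp_plus. f_equal. field. }
pose proof (exp_pos (- t)). pose proof (Rpower_pos t (s - 1)).
rewrite <- E. nra.
Qed.

Lemma int_exp_half b : 1 <= b -> RInt (fun t => exp (- t / 2)) 1 b <= 2.
Proof.
intros Hb.
assert (H := is_RInt_derive (V:=R_CompleteNormedModule) (fun t => -2 * exp (- t / 2)) (fun t => exp (- t / 2)) 1 b).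
assert (Hd : forall x, Rmin 1 b <= x <= Rmax 1 b -> is_derive (fun t => -2 * exp (- t / 2)) x (exp (- x / 2))).
{ intros x _. auto_derive; auto. replace (- x / 2) with (- x * / 2) by reflexivity. field. }
assert (Hc : forall x, Rmin 1 b <= x <= Rmax 1 b -> continuous (fun t => exp (- t / 2)) x).
{ intros x _. apply exd_cont. auto_derive. auto. }
rewrite (is_RInt_unique _ _ _ _ (H Hd Hc)).
- unfold minus, plus, opp; simpl. pose proof (exp_pos (- b / 2)).
  assert (exp (- (1) / 2) <= 1) by (rewrite <- exp_0 at 2; apply exp_mono; lra). lra.
Qed.

Lemma cont_exph t : continuous (fun t => exp (- t / 2)) t.
Proof. apply exd_cont. auto_derive. auto. Qed.

Lemma gam_bound s : 0 < s -> exists M, forall a b, 0 < a -> a <= b -> RInt (gam s) a b <= M.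
Proof.
intros Hs.
destruct (INR_unbounded (s - 1)) as [n Hn].
set (K := INR (fact n) * 2 ^ n).
assert (HK : 0 < K) by (apply Rmult_lt_0_compat; [apply lt_0_INR, lt_O_fact| apply pow_lt; lra]).
exists (1 / s + K * 2).
intros a b Ha Hab.
set (a' := Rmin a 1). set (b' := Rmax b 1).
assert (Ha' : 0 < a' /\ a' <= a /\ a' <= 1) by (unfold a', Rmin; destruct Rle_dec; lra).
assert (Hb' : b <= b' /\ 1 <= b') by (unfold b', Rmax; destruct Rle_dec; lra).
assert (Hc : forall x, 0 < x -> continuous (gam s) x) by (intros; apply cont_gam; auto).
assert (Hex : forall u v, 0 < u -> u <= v -> ex_RInt (gam s) u v).
{ intros u v Hu Huv. apply exRc. intros x Hx. rewrite Rmin_left in Hx by lra. apply Hc. lra. }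
eapply Rle_trans.
{ apply (RInt_mono_int (gam s) a' a b b'); try lra.
  - intros x Hx. apply Hc. lra.
  - intros x _. left. apply gam_pos. }
rewrite <- (RInt_Chasles (V:=R_CompleteNormedModule) (gam s) a' 1 b') by (apply Hex; lra).
unfold plus; simpl.
apply Rplus_le_compat.
- eapply Rle_trans.
  { apply (RInt_le (gam s) (fun t => Rpower t (s - 1)) a' 1); try lra.
    + apply Hex; lra.
    + apply exRc. intros x Hx. rewrite Rmin_left in Hx by lra. apply cont_Rpower. lra.
    + intros x Hx. apply gam_le_small; lra. }
  rewrite int_pow by lra. rewrite Rpower_one.
  pose proof (Rpower_pos a' s).
  unfold Rdiv. apply Rmult_le_compat_r; [left; apply Rinv_0_lt_compat, Hs| lra].
- eapply Rle_trans.
  { apply (RInt_le (gam s) (fun t => K * exp (- t / 2)) 1 b'); try lra.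
    + apply Hex; lra.
    + apply exRc. intros x Hx. apply exd_cont. auto_derive. auto.
    + intros x Hx. apply gam_le_big; lra. }
  assert (E : RInt (fun t => K * exp (- t / 2)) 1 b' = K * RInt (fun t => exp (- t / 2)) 1 b').
  { apply (RInt_scal (V:=R_CompleteNormedModule)). apply exRc. intros; apply cont_exph. }
  rewrite E. apply Rmult_le_compat_l; [lra|]. apply int_exp_half. lra.
Qed.

Lemma at_right_0_le a0 : 0 < a0 -> at_right 0 (fun a => 0 < a /\ a <= a0).
Proof.
intros Ha0. exists (mkposreal a0 Ha0). intros y Hy Hp. simpl in *.
unfold ball in Hy; simpl in Hy. unfold AbsRing_ball, abs, minus, plus, opp in Hy; simpl in Hy.
rewrite Ropp_0, Rplus_0_r in Hy. unfold Rabs in Hy; destruct Rcase_abs in Hy; split; lra.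
Qed.

Lemma Gamma_props s : 0 < s ->
  (forall a b, 0 < a -> a <= b -> RInt (gam s) a b <= Gamma s) /\
  (forall e, 0 < e -> exists a b, 0 < a /\ a <= b /\ Gamma s - e < RInt (gam s) a b).
Proof.
intros Hs.
destruct (gam_bound s Hs) as [M HM].
destruct (lub_ex (fun y => exists a b, 0 < a /\ a <= b /\ y = RInt (gam s) a b) M) as [L [HL1 HL2]].
{ exists (RInt (gam s) 1 1). exists 1, 1. repeat split; lra. }
{ intros y [a [b [Ha [Hab ->]]]]. apply HM; auto. }
assert (Hex : forall u v, 0 < u -> u <= v -> ex_RInt (gam s) u v).
{ intros u v Hu Huv. apply exRc. intros x Hx. rewrite Rmin_left in Hx by lra. apply cont_gam. lra. }
assert (HG : is_RInt_gen (gam s) (at_right 0) (Rbar_locally p_infty) L).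
{ apply (sup_gen (gam s) (at_right 0) (Rbar_locally p_infty) _ _ (fun a b => 0 < a /\ a <= b) L).
  - intros a b [Ha Hab]. apply Hex; auto.
  - intros a b [Ha Hab]. apply HL1. exists a, b. auto.
  - intros e He. destruct (HL2 e He) as [y [[a [b [Ha [Hab ->]]]] Hy]]. exists a, b. auto.
  - intros a0 b0 [Ha0 Hab0].
    apply (Filter_prod _ _ _ (fun a => 0 < a /\ a <= a0) (fun b => b0 <= b)).
    + apply at_right_0_le, Ha0.
    + exists b0. intros; lra.
    + intros a b [Ha Haa] Hb. simpl. split; [lra|].
      apply RInt_mono_int; try lra.
      * intros x Hx. apply cont_gam. lra.
      * intros x _. left. apply gam_pos. }
assert (E : Gamma s = L) by (apply is_RInt_gen_unique; exact HG).
rewrite E. split.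
- intros a b Ha Hab. apply HL1. exists a, b. auto.
- intros e He. destruct (HL2 e He) as [y [[a [b [Ha [Hab ->]]]] Hy]]. exists a, b. auto.
Qed.

Lemma Gamma_pos s : 0 < s -> 0 < Gamma s.
Proof.
intros Hs. destruct (Gamma_props s Hs) as [H1 _].
eapply Rlt_le_trans; [| apply (H1 1 2); lra].
apply RInt_gt_0; [lra| intros; apply gam_pos| intros; apply cont_gam; lra].
Qed.

Lemma cpt_of_cont (f : R -> R) x : continuous f x -> continuity_pt f x.
Proof. intros H. apply continuity_pt_filterlim. exact H. Qed.

Lemma c2d_fst (g : R -> R) x y : continuous g x -> continuity_2d_pt (fun u v => g u) x y.
Proof.
intros H. apply (continuity_1d_2d_pt_comp g (fun u v => u) x y).
- apply cpt_of_cont, H.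
- apply continuity_2d_pt_id1.
Qed.

Lemma c2d_snd (g : R -> R) x y : continuous g y -> continuity_2d_pt (fun u v => g v) x y.
Proof.
intros H. apply (continuity_1d_2d_pt_comp g (fun u v => v) x y).
- apply cpt_of_cont, H.
- apply continuity_2d_pt_id2.
Qed.

Lemma ex_RInt_param_rect (f : R -> R -> R) a b c d : a <= b -> c <= d ->
  (forall x y, a <= x <= b -> c <= y <= d -> continuity_2d_pt f x y) ->
  ex_RInt (fun y => RInt (fun x => f x y) a b) c d.
Proof.
intros Hab Hcd Hf.
set (g x y := f (clamp a b x) (clamp c d y)).
assert (Hg : forall x y, continuity_2d_pt g x y).
{ intros x y eps.
  destruct (Hf (clamp a b x) (clamp c d y) (clamp_in _ _ _ Hab) (clamp_in _ _ _ Hcd) eps) as [del Hd].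
  exists del. intros u v Hu Hv. unfold g. apply Hd.
  - eapply Rle_lt_trans; [apply clamp_lip| exact Hu].
  - eapply Rle_lt_trans; [apply clamp_lip| exact Hv]. }
apply (ex_RInt_ext (V:=R_NormedModule) (fun y => RInt (fun x => g x y) a b)).
- intros y Hy. rewrite Rmin_left in Hy by lra. rewrite Rmax_right in Hy by lra.
  apply RInt_ext. intros x Hx. rewrite Rmin_left in Hx by lra. rewrite Rmax_right in Hx by lra.
  unfold g. rewrite !clamp_id by lra. reflexivity.
- apply exRc. intros y _. apply param_cont, Hg.
Qed.

Definition Jx (x p q : R) := RInt_gen (fun t => Rpower t (p - 1) * Rpower (1 - t) (q - 1))
  (at_right 0) (at_point x).

Lemma pow1m_bound x q t : 0 < t -> t <= x -> x < 1 ->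
  Rpower (1 - t) (q - 1) <= 1 + Rpower (1 - x) (q - 1).
Proof.
intros Ht Htx Hx. pose proof (Rpower_pos (1 - x) (q - 1)).
destruct (Rle_dec 0 (q - 1)) as [Hq|Hq].
- assert (Rpower (1 - t) (q - 1) <= Rpower 1 (q - 1)) by (apply Rle_Rpower_l; lra).
  rewrite Rpower_one in *. lra.
- replace (q - 1) with (- (1 - q)) by ring. rewrite !Rpower_Ropp.
  assert (Rpower (1 - x) (1 - q) <= Rpower (1 - t) (1 - q)) by (apply Rle_Rpower_l; lra).
  pose proof (Rpower_pos (1 - x) (1 - q)).
  assert (/ Rpower (1 - t) (1 - q) <= / Rpower (1 - x) (1 - q)) by (apply Rinv_le_contravar; lra).
  pose proof (Rpower_pos (1 - x) (- (1 - q))) as H4. rewrite Rpower_Ropp in H4. lra.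
Qed.

Lemma bet_bound x p q : 0 < x < 1 -> 0 < p ->
  exists M, forall a, 0 < a -> a <= x -> RInt (bet p q) a x <= M.
Proof.
intros Hx Hp. set (K := 1 + Rpower (1 - x) (q - 1)).
assert (HK : 0 < K) by (unfold K; pose proof (Rpower_pos (1 - x) (q - 1)); lra).
exists (K * (Rpower x p / p)). intros a Ha Hax.
eapply Rle_trans.
{ apply (RInt_le (bet p q) (fun t => K * Rpower t (p - 1)) a x); auto.
  - apply exRc. intros y Hy. rewrite Rmin_left in Hy by lra. rewrite Rmax_right in Hy by lra.
    apply cont_bet. lra.
  - apply exRc. intros y Hy. rewrite Rmin_left in Hy by lra. apply exd_cont. auto_derive.
    apply ex_der_Rpower. lra.
  - intros t Ht. unfold bet. pose proof (Rpower_pos t (p - 1)).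
    pose proof (pow1m_bound x q t ltac:(lra) ltac:(lra) ltac:(lra)) as H0. fold K in H0. nra. }
assert (E : RInt (fun t => K * Rpower t (p - 1)) a x = K * RInt (fun t => Rpower t (p - 1)) a x).
{ apply (RInt_scal (V:=R_CompleteNormedModule)). apply exRc. intros y Hy.
  rewrite Rmin_left in Hy by lra. apply cont_Rpower. lra. }
rewrite E, int_pow by lra. apply Rmult_le_compat_l; [lra|].
pose proof (Rpower_pos a p). unfold Rdiv. apply Rmult_le_compat_r; [left; apply Rinv_0_lt_compat, Hp| lra].
Qed.

Lemma J_props x p q : 0 < x < 1 -> 0 < p ->
  (forall a, 0 < a -> a <= x -> RInt (bet p q) a x <= Jx x p q) /\
  (forall e, 0 < e -> exists a, 0 < a /\ a <= x /\ Jx x p q - e < RInt (bet p q) a x).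
Proof.
intros Hx Hp.
destruct (bet_bound x p q Hx Hp) as [M HM].
destruct (lub_ex (fun y => exists a, 0 < a /\ a <= x /\ y = RInt (bet p q) a x) M) as [L [HL1 HL2]].
{ exists (RInt (bet p q) x x). exists x. repeat split; lra. }
{ intros y [a [Ha [Hab ->]]]. apply HM; auto. }
assert (Hex : forall u, 0 < u -> u <= x -> ex_RInt (bet p q) u x).
{ intros u Hu Hux. apply exRc. intros y Hy. rewrite Rmin_left in Hy by lra.
  rewrite Rmax_right in Hy by lra. apply cont_bet. lra. }
assert (HG : is_RInt_gen (bet p q) (at_right 0) (at_point x) L).
{ apply (sup_gen (bet p q) (at_right 0) (at_point x) _ _ (fun a b => 0 < a /\ a <= x /\ b = x) L).
  - intros a b [Ha [Hab ->]]. apply Hex; auto.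
  - intros a b [Ha [Hab ->]]. apply HL1. exists a. auto.
  - intros e He. destruct (HL2 e He) as [y [[a [Ha [Hab ->]]] Hy]]. exists a, x. auto.
  - intros a0 b0 [Ha0 [Hab0 ->]].
    apply (Filter_prod _ _ _ (fun a => 0 < a /\ a <= a0) (fun b => b = x)).
    + apply at_right_0_le, Ha0.
    + reflexivity.
    + intros a b [Ha Haa] ->. simpl. split; [lra|].
      apply RInt_mono_int; try lra.
      * intros y Hy. apply cont_bet. lra.
      * intros y _. left. apply bet_pos. }
assert (E : Jx x p q = L) by (apply is_RInt_gen_unique; exact HG).
rewrite E. split.
- intros a Ha Hab. apply HL1. exists a. auto.
- intros e He. destruct (HL2 e He) as [y [[a [Ha [Hab ->]]] Hy]]. exists a. auto.
Qed.

Definition kf (p q t u : R) := / (1 - u) * (gam (p + q) (t / (1 - u)) * bet p q u).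

Lemma key_id p q t s : 0 < t -> 0 < s ->
  t / (t + s) ^ 2 * kf p q t (s / (t + s)) = gam q t * gam p s.
Proof.
intros Ht Hs. unfold kf.
replace (1 - s / (t + s)) with (t / (t + s)) by (field; lra).
replace (t / (t / (t + s))) with (t + s) by (field; lra).
unfold gam, bet.
replace (1 - s / (t + s)) with (t / (t + s)) by (field; lra).
unfold Rpower. rewrite !ln_div by lra.
assert (H : forall Z, t / (t + s) ^ 2 * (/ (t / (t + s)) * Z) = exp (- ln (t + s)) * Z).
{ intros Z. rewrite exp_Ropp, exp_ln by lra. field. lra. }
rewrite H. rewrite <- !exp_plus. f_equal. ring.
Qed.

Lemma cont2_k p q t u : 0 < t -> 0 < u < 1 -> continuity_2d_pt (kf p q) t u.
Proof.
intros Ht Hu. unfold kf.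
apply (continuity_2d_pt_mult (fun t u => / (1 - u)) (fun t u => gam (p + q) (t / (1 - u)) * bet p q u)).
- apply (continuity_2d_pt_inv (fun t u => 1 - u)).
  + apply (continuity_2d_pt_minus (fun _ _ => 1) (fun t u => u)).
    apply continuity_2d_pt_const. apply continuity_2d_pt_id2.
  + lra.
- apply (continuity_2d_pt_mult (fun t u => gam (p + q) (t / (1 - u))) (fun t u => bet p q u)).
  + apply (continuity_1d_2d_pt_comp (gam (p + q)) (fun t u => t / (1 - u))).
    * apply cpt_of_cont, cont_gam. apply Rdiv_lt_0_compat; lra.
    * apply (continuity_2d_pt_mult (fun t u => t) (fun t u => / (1 - u))).
      -- apply continuity_2d_pt_id1.
      -- apply (continuity_2d_pt_inv (fun t u => 1 - u)).
         ++ apply (continuity_2d_pt_minus (fun _ _ => 1) (fun t u => u)).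
            apply continuity_2d_pt_const. apply continuity_2d_pt_id2.
         ++ lra.
  + apply (c2d_snd (bet p q)). apply cont_bet. lra.
Qed.

Lemma kf_pos p q t u : u < 1 -> 0 < kf p q t u.
Proof.
intros Hu. unfold kf. apply Rmult_lt_0_compat.
- apply Rinv_0_lt_compat. lra.
- apply Rmult_lt_0_compat; [apply gam_pos| apply bet_pos].
Qed.

Lemma cont_gam_mul c b r : 0 < r -> continuous (fun r => gam c r * b) r.
Proof. intros Hr. apply exd_cont. unfold gam. auto_derive. apply ex_der_Rpower. exact Hr. Qed.

Lemma step2 p q x eta T u : 0 < x < 1 -> 0 < eta -> eta <= T -> 0 < u <= x ->
  RInt (fun r => gam (p + q) r * bet p q u) eta T <= RInt (fun t => kf p q t u) (eta * (1 - x)) T.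
Proof.
intros Hx Heta HT Hu. set (w := 1 - u).
assert (Hw : 0 < w) by (unfold w; lra).
assert (E := RInt_comp (V:=R_CompleteNormedModule) (fun r => gam (p + q) r * bet p q u)
   (fun t => t / w) (fun _ => / w) (eta * w) (T * w)).
cbv beta in E.
replace (eta * w / w) with eta in E by (field; lra).
replace (T * w / w) with T in E by (field; lra).
rewrite <- E.
- apply (RInt_mono_int (fun t => kf p q t u)).
  + unfold w. apply Rmult_le_compat_l; lra.
  + apply Rmult_le_compat_r; lra.
  + unfold w. nra.
  + intros y Hy. apply (cont2d_fst (kf p q) y u). apply cont2_k; nra.
  + intros y _. left. apply kf_pos. lra.
- intros y Hy. rewrite Rmin_left in Hy by nra. apply cont_gam_mul.
  apply Rdiv_lt_0_compat; nra.
- intros y _. split.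
  + auto_derive; auto. field. lra.
  + apply continuous_const.
Qed.

Lemma step5 p q x eps t : 0 < p -> 0 < x < 1 -> 0 < eps <= x -> 0 < t ->
  RInt (fun u => kf p q t u) eps x <= Gamma p * gam q t.
Proof.
intros Hp Hx He Ht.
set (s1 := t * eps / (1 - eps)). set (s2 := t * x / (1 - x)).
assert (Hs1 : 0 < s1) by (unfold s1; apply Rdiv_lt_0_compat; nra).
assert (Hs12 : s1 <= s2).
{ unfold s1, s2. unfold Rdiv. rewrite !Rmult_assoc. apply Rmult_le_compat_l; [lra|].
  apply (Rmult_le_reg_r ((1 - eps) * (1 - x))); [nra|].
  replace (eps * / (1 - eps) * ((1 - eps) * (1 - x))) with (eps * (1 - x)) by (field; lra).
  replace (x * / (1 - x) * ((1 - eps) * (1 - x))) with (x * (1 - eps)) by (field; lra). nra. }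
assert (E := RInt_comp (V:=R_CompleteNormedModule) (fun u => kf p q t u)
   (fun s => s / (t + s)) (fun s => t / (t + s) ^ 2) s1 s2).
cbv beta in E.
replace (s1 / (t + s1)) with eps in E by (unfold s1; field; lra).
replace (s2 / (t + s2)) with x in E by (unfold s2; field; lra).
rewrite <- E.
- rewrite (RInt_ext _ (fun s => gam q t * gam p s)).
  2: { intros y Hy. rewrite Rmin_left in Hy by lra. rewrite Rmax_right in Hy by lra.
       apply key_id; lra. }
  rewrite (RInt_scal (V:=R_CompleteNormedModule) (gam p)).
  2: { apply exRc. intros y Hy. rewrite Rmin_left in Hy by lra. apply cont_gam. lra. }
  unfold scal; simpl; unfold mult; simpl.
  destruct (Gamma_props p Hp) as [H1 _].
  pose proof (H1 s1 s2 Hs1 Hs12). pose proof (gam_pos q t). nra.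
- intros y Hy. rewrite Rmin_left in Hy by lra. rewrite Rmax_right in Hy by lra.
  apply (cont2d_snd (kf p q) t). apply cont2_k; [lra|].
  split; [apply Rdiv_lt_0_compat; lra|].
  apply (Rmult_lt_reg_r (t + y)); [lra|]. unfold Rdiv. rewrite Rmult_assoc, Rinv_l; lra.
- intros y Hy. rewrite Rmin_left in Hy by lra. rewrite Rmax_right in Hy by lra. split.
  + auto_derive; [lra|]. field. lra.
  + apply exd_cont. auto_derive. apply Rmult_integral_contrapositive; split; lra.
Qed.

Lemma core p q x eta T eps : 0 < p -> 0 < q -> 0 < x < 1 -> 0 < eta -> eta <= T ->
  0 < eps -> eps <= x ->
  RInt (gam (p + q)) eta T * RInt (bet p q) eps x <= Gamma p * Gamma q.
Proof.
intros Hp Hq Hx Heta HT He Hex.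
set (eta' := eta * (1 - x)).
assert (Heta' : 0 < eta' /\ eta' <= T) by (unfold eta'; nra).
set (G0 := RInt (gam (p + q)) eta T).
assert (E1 : G0 * RInt (bet p q) eps x =
   RInt (fun u => RInt (fun r => gam (p + q) r * bet p q u) eta T) eps x).
{ rewrite (RInt_ext (fun u => RInt (fun r => gam (p + q) r * bet p q u) eta T) (fun u => G0 * bet p q u)).
  - symmetry. apply (RInt_scal (V:=R_CompleteNormedModule) (bet p q)).
    apply exRc. intros y Hy. rewrite Rmin_left in Hy by lra. rewrite Rmax_right in Hy by lra.
    apply cont_bet. lra.
  - intros u Hu.
    rewrite (RInt_ext _ (fun r => bet p q u * gam (p + q) r)) by (intros; apply Rmult_comm).
    rewrite (RInt_scal (V:=R_CompleteNormedModule) (gam (p + q))).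
    + unfold scal; simpl; unfold mult; simpl. unfold G0. ring.
    + apply exRc. intros y Hy. rewrite Rmin_left in Hy by lra. apply cont_gam. lra. }
rewrite E1.
eapply Rle_trans.
{ apply (RInt_le _ (fun u => RInt (fun t => kf p q t u) eta' T)); [lra| | |].
  - apply (ex_RInt_param_rect (fun r u => gam (p + q) r * bet p q u)); try lra.
    intros r u Hr Hu.
    apply (continuity_2d_pt_mult (fun r u => gam (p + q) r) (fun r u => bet p q u)).
    + apply (c2d_fst (gam (p + q))). apply cont_gam. lra.
    + apply (c2d_snd (bet p q)). apply cont_bet. lra.
  - apply (ex_RInt_param_rect (kf p q)); try lra.
    intros t u Ht Hu. apply cont2_k; lra.
  - intros u Hu. apply step2; lra. }
rewrite <- (fubini_rect (kf p q) eta' T eps x) by (lra || (intros t u Ht Hu; apply cont2_k; lra)).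
eapply Rle_trans.
{ apply (RInt_le _ (fun t => Gamma p * gam q t)); [lra| | |].
  - apply (ex_RInt_param_rect (fun u t => kf p q t u)); try lra.
    intros u t Hu Ht. apply (cont2d_swap (kf p q) t u). apply cont2_k; lra.
  - apply exRc. intros y Hy. rewrite Rmin_left in Hy by lra.
    apply (exd_cont (fun t => Gamma p * gam q t)). unfold gam. auto_derive.
    apply ex_der_Rpower. lra.
  - intros t Ht. apply step5; lra. }
rewrite (RInt_scal (V:=R_CompleteNormedModule) (gam q)).
2: { apply exRc. intros y Hy. rewrite Rmin_left in Hy by lra. apply cont_gam. lra. }
unfold scal; simpl; unfold mult; simpl.
apply Rmult_le_compat_l; [left; apply Gamma_pos, Hp|].
destruct (Gamma_props q Hq) as [H1 _]. apply H1; lra.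
Qed.

Lemma le_eps A B : (forall e, 0 < e -> A - e < B) -> A <= B.
Proof.
intros H. apply Rnot_lt_le. intros Hlt.
specialize (H ((A - B) / 2) ltac:(lra)). lra.
Qed.

Lemma J_le p q x : 0 < p -> 0 < q -> 0 < x < 1 ->
  Jx x p q * Gamma (p + q) <= Gamma p * Gamma q.
Proof.
intros Hp Hq Hx.
set (C := Gamma p * Gamma q). set (G := Gamma (p + q)).
assert (HG : 0 < G) by (apply Gamma_pos; lra).
destruct (Gamma_props (p + q) ltac:(lra)) as [_ HG2].
destruct (J_props x p q Hx Hp) as [_ HJ2].
assert (H1 : forall a, 0 < a -> a <= x -> RInt (bet p q) a x <= C / G).
{ intros a Ha Hax.
  assert (HS : 0 <= RInt (bet p q) a x).
  { apply RInt_ge_0; auto.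
    - apply exRc. intros y Hy. rewrite Rmin_left in Hy by lra. rewrite Rmax_right in Hy by lra.
      apply cont_bet. lra.
    - intros; left; apply bet_pos. }
  destruct HS as [HS|HS].
  - assert (G <= C / RInt (bet p q) a x).
    { apply le_eps. intros e He. destruct (HG2 e He) as [a' [b' [Ha' [Hab' Hlt]]]].
      eapply Rlt_le_trans; [exact Hlt|].
      apply (Rmult_le_reg_r (RInt (bet p q) a x)); auto.
      unfold Rdiv. rewrite Rmult_assoc, Rinv_l by lra. rewrite Rmult_1_r.
      apply core; lra. }
    apply (Rmult_le_reg_r G); auto. unfold Rdiv. rewrite Rmult_assoc, Rinv_l by lra.
    rewrite Rmult_1_r.
    apply (Rmult_le_compat_l (RInt (bet p q) a x)) in H; [|lra].
    unfold Rdiv in H. rewrite <- Rmult_assoc in H.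
    rewrite (Rmult_comm (RInt (bet p q) a x) C), Rmult_assoc, Rinv_r in H by lra. lra.
  - rewrite <- HS. unfold C. apply Rdiv_le_0_compat; auto.
    pose proof (Gamma_pos p Hp). pose proof (Gamma_pos q Hq). nra. }
assert (Jx x p q <= C / G).
{ apply le_eps. intros e He. destruct (HJ2 e He) as [a [Ha [Hax Hlt]]].
  eapply Rlt_le_trans; [exact Hlt|]. apply H1; auto. }
apply (Rmult_le_compat_r G) in H; [|lra].
unfold Rdiv in H. rewrite Rmult_assoc, Rinv_l in H by lra. lra.
Qed.

Lemma Ireg_bounds x p q : 0 < p -> 0 < q -> 0 < x < 1 -> 0 <= Ireg x p q < 1.
Proof.
intros Hp Hq Hx.
change (Ireg x p q) with (Jx x p q / Beta p q).
assert (HB : 0 < Beta p q).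
{ unfold Beta. pose proof (Gamma_pos p Hp). pose proof (Gamma_pos q Hq).
  pose proof (Gamma_pos (p + q) ltac:(lra)). apply Rdiv_lt_0_compat; nra. }
set (x' := (1 + x) / 2).
assert (Hx' : 0 < x' < 1 /\ x < x') by (unfold x'; lra).
destruct (J_props x p q Hx Hp) as [HJ1 HJ2].
destruct (J_props x' p q ltac:(lra) Hp) as [HJ1' _].
assert (Hexb : forall u v, 0 < u -> u <= v -> v < 1 -> ex_RInt (bet p q) u v).
{ intros u v Hu Huv Hv. apply exRc. intros y Hy. rewrite Rmin_left in Hy by lra.
  rewrite Rmax_right in Hy by lra. apply cont_bet. lra. }
assert (Hpos : 0 < RInt (bet p q) x x').
{ apply RInt_gt_0; [lra| intros; apply bet_pos| intros y Hy; apply cont_bet; lra]. }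
assert (HJ0 : 0 <= Jx x p q).
{ eapply Rle_trans; [| apply (HJ1 x); lra]. rewrite RInt_point. right; reflexivity. }
assert (Hlt : Jx x p q + RInt (bet p q) x x' <= Jx x' p q).
{ apply le_eps. intros e He. destruct (HJ2 e He) as [a [Ha [Hax Hl]]].
  eapply Rlt_le_trans; [| apply (HJ1' a); lra].
  rewrite <- (RInt_Chasles (V:=R_CompleteNormedModule) (bet p q) a x x') by (apply Hexb; lra).
  unfold plus; simpl. lra. }
pose proof (J_le p q x' ltac:(lra) Hq ltac:(lra)) as HJl.
assert (HGs : 0 < Gamma (p + q)) by (apply Gamma_pos; lra).
assert (Jx x p q < Beta p q).
{ unfold Beta. apply (Rmult_lt_reg_r (Gamma (p + q))); auto.
  unfold Rdiv. rewrite Rmult_assoc, Rinv_l by lra. nra. }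
split.
- apply Rdiv_le_0_compat; auto.
- apply (Rmult_lt_reg_r (Beta p q)); auto. unfold Rdiv. rewrite Rmult_assoc, Rinv_l by lra. lra.
Qed.

Lemma fsum_ext n f g : (forall k, (k < n)%nat -> f k = g k) -> fsum n f = fsum n g.
Proof.
induction n; simpl; intros H; auto.
rewrite IHn by (intros; apply H; lia). rewrite H by lia. reflexivity.
Qed.

Lemma fsum_plus n f g : fsum n (fun k => f k + g k) = fsum n f + fsum n g.
Proof. induction n; simpl; [ring| rewrite IHn; ring]. Qed.

Lemma fsum_scal n c f : fsum n (fun k => c * f k) = c * fsum n f.
Proof. induction n; simpl; [ring| rewrite IHn; ring]. Qed.

Lemma fsum_minus n f g : fsum n (fun k => f k - g k) = fsum n f - fsum n g.
Proof. induction n; simpl; [ring| rewrite IHn; ring]. Qed.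

Lemma fsum_le n f g : (forall k, (k < n)%nat -> f k <= g k) -> fsum n f <= fsum n g.
Proof.
induction n; simpl; intros H; [lra|].
assert (fsum n f <= fsum n g) by (apply IHn; intros; apply H; lia).
assert (f n <= g n) by (apply H; lia). lra.
Qed.

Lemma fsum_nonneg n f : (forall k, (k < n)%nat -> 0 <= f k) -> 0 <= fsum n f.
Proof.
intros H. replace 0 with (fsum n (fun _ => 0)).
- apply fsum_le. auto.
- clear H. induction n; simpl; [reflexivity| rewrite IHn; ring].
Qed.

Lemma fsum_lt_const n f e : (0 < n)%nat -> (forall k, (k < n)%nat -> f k < e) -> fsum n f < INR n * e.
Proof.
induction n; intros Hn H; [lia|].
simpl fsum. rewrite S_INR.
destruct n.
- simpl. specialize (H 0%nat ltac:(lia)). lra.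
- assert (fsum (S n) f < INR (S n) * e) by (apply IHn; [lia| intros; apply H; lia]).
  specialize (H (S n) ltac:(lia)). lra.
Qed.

Lemma fsum_lt_first n f g : (0 < n)%nat -> f 0%nat < g 0%nat ->
  (forall k, (k < n)%nat -> f k <= g k) -> fsum n f < fsum n g.
Proof.
induction n; intros Hn H0 H; [lia|].
simpl fsum. destruct n.
- simpl. lra.
- assert (fsum (S n) f < fsum (S n) g) by (apply IHn; [lia| exact H0| intros; apply H; lia]).
  specialize (H (S n) ltac:(lia)). lra.
Qed.

Lemma fsum_mono_n n n' f : (n <= n')%nat -> (forall k, 0 <= f k) -> fsum n f <= fsum n' f.
Proof.
intros Hn Hf. induction Hn; [lra|]. simpl. specialize (Hf m). lra.
Qed.

Lemma fsum_swap n m (c : nat -> nat -> R) :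
  fsum n (fun j => fsum m (fun l => c j l)) = fsum m (fun l => fsum n (fun j => c j l)).
Proof.
induction n; simpl.
- clear. induction m; simpl; [reflexivity| rewrite <- IHm; ring].
- rewrite IHn. rewrite <- fsum_plus. reflexivity.
Qed.

Lemma fsum_sum_f n f : fsum (S n) f = sum_f_R0 f n.
Proof. induction n; simpl in *; [ring| rewrite <- IHn; reflexivity]. Qed.

Lemma Series_zero : Series (fun _ => 0) = 0.
Proof.
unfold Series. rewrite (Lim_seq_ext _ (fun _ => 0)).
- rewrite Lim_seq_const. reflexivity.
- intros n. induction n; [rewrite sum_O; reflexivity| rewrite sum_Sn, IHn; unfold plus; simpl; ring].
Qed.

Lemma Series_ge0 a : (forall k, 0 <= a k) -> ex_series a -> 0 <= Series a.
Proof.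
intros H Hex. rewrite <- Series_zero. apply Series_le; auto. intros; split; [lra| auto].
Qed.

Lemma fsum_le_Series n a : (forall k, 0 <= a k) -> ex_series a -> fsum n a <= Series a.
Proof.
intros H Hex. destruct n.
- simpl. apply Series_ge0; auto.
- rewrite (Series_incr_n a (S n)) by (auto; lia). simpl pred. rewrite fsum_sum_f.
  assert (0 <= Series (fun k => a (S n + k)%nat)).
  { apply Series_ge0; auto. apply (ex_series_incr_n a (S n)). exact Hex. }
  lra.
Qed.

Lemma is_series_poisson d : is_series (fun l => exp (- d) * (d ^ l / INR (fact l))) 1.
Proof.
replace 1 with (exp (- d) * exp d) by (rewrite <- exp_plus; replace (- d + d) with 0 by ring; apply exp_0).
apply (is_series_scal_l (V:=R_NormedModule) (exp (- d))).
pose proof (is_exp_Reals d) as H. unfold is_pseries in H.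
eapply is_series_ext; [| exact H]. intros n. simpl. unfold scal; simpl; unfold mult; simpl.
rewrite pow_n_pow. unfold Rdiv. ring.
Qed.

Fixpoint mx (m : nat -> nat) (n : nat) : nat :=
  match n with O => O | S n' => Nat.max (mx m n') (m n') end.

Lemma mx_ge m n k : (k < n)%nat -> (m k <= mx m n)%nat.
Proof. induction n; simpl; intros H; [lia|]. destruct (Nat.eq_dec k n); [subst; lia|]. specialize (IHn ltac:(lia)). lia. Qed.

Theorem mainTheorem4 (a b d1 d2 x e21 e22 : R) (l1 : nat) (m : nat -> nat) :
  0 < a -> 0 < b -> 0 < d1 -> 0 < d2 -> 0 < x < 1 -> 0 < e21 -> 0 < e22 ->
  (0 < l1)%nat ->
  1 - exp (- d2) * fsum l1 (fun l => d2 ^ l / INR (fact l)) < e21 ->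
  (forall l : nat, (l < l1)%nat ->
     exp (- d2) * (d2 ^ l / INR (fact l))
       * (1 - exp (- d1) * fsum (m l) (fun j => d1 ^ j / INR (fact j))) < e22) ->
  let Bhat := fsum l1 (fun l => fsum (m l) (fun j => Lterm a b d1 d2 x j l)) in
  let U2 := 1 - exp (- (d1 + d2)) *
              fsum l1 (fun l => d2 ^ l / INR (fact l) *
                                 fsum (m l) (fun j => d1 ^ j / INR (fact j))) in
  dncbeta_cdf a b d1 d2 x - Bhat < U2 /\ U2 < e21 + INR l1 * e22.
Proof.
intros Ha Hb Hd1 Hd2 Hx He21 He22 Hl1 H1 H2 Bhat U2.
set (P1 j := exp (- d1) * (d1 ^ j / INR (fact j))).
set (P2 l := exp (- d2) * (d2 ^ l / INR (fact l))).
set (w j l := P1 j * P2 l).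
set (I j l := Ireg x (INR j + a) (INR l + b)).
assert (HL : forall j l, Lterm a b d1 d2 x j l = w j l * I j l).
{ intros j l. unfold Lterm, w, P1, P2, I.
  replace (- (d1 + d2)) with (- d1 + - d2) by ring. rewrite exp_plus.
  field. split; apply not_0_INR, fact_neq_0. }
assert (HP1 : forall j, 0 < P1 j).
{ intros j. unfold P1. apply Rmult_lt_0_compat; [apply exp_pos|].
  apply Rdiv_lt_0_compat; [apply pow_lt; lra| apply lt_0_INR, lt_O_fact]. }
assert (HP2 : forall l, 0 < P2 l).
{ intros l. unfold P2. apply Rmult_lt_0_compat; [apply exp_pos|].
  apply Rdiv_lt_0_compat; [apply pow_lt; lra| apply lt_0_INR, lt_O_fact]. }
assert (Hw : forall j l, 0 < w j l) by (intros; unfold w; apply Rmult_lt_0_compat; auto).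
assert (HI : forall j l, 0 <= I j l < 1).
{ intros j l. unfold I. apply Ireg_bounds; auto.
  - pose proof (pos_INR j); lra.
  - pose proof (pos_INR l); lra. }
set (c j l := w j l - Lterm a b d1 d2 x j l).
assert (Hc : forall j l, 0 < c j l /\ c j l <= w j l).
{ intros j l. unfold c. rewrite HL. specialize (HI j l). specialize (Hw j l). split; nra. }
assert (HP2s : is_series P2 1) by apply is_series_poisson.
assert (HP1s : is_series P1 1) by apply is_series_poisson.
assert (Hws : forall j, is_series (fun l => w j l) (P1 j)).
{ intros j. replace (P1 j) with (scal (P1 j) 1) by (unfold scal; simpl; unfold mult; simpl; ring).
  apply (is_series_scal_l (V:=R_NormedModule)). exact HP2s. }
assert (HwE : forall j, ex_series (fun l => w j l)) by (intros j; eexists; apply Hws).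
assert (HLE : forall j, ex_series (fun l => Lterm a b d1 d2 x j l)).
{ intros j. apply (ex_series_le (V:=R_CompleteNormedModule) _ (fun l => w j l)); auto.
  intros l. unfold norm; simpl. rewrite HL. specialize (HI j l). specialize (Hw j l).
  rewrite Rabs_pos_eq by nra. nra. }
assert (HcE : forall j, ex_series (fun l => c j l)).
{ intros j. apply (ex_series_minus (V:=R_NormedModule)); auto. }
set (SC j := Series (fun l => c j l)).
assert (HSC : forall j, Series (fun l => Lterm a b d1 d2 x j l) = P1 j - SC j).
{ intros j. unfold SC, c. rewrite Series_minus by auto.
  rewrite (is_series_unique (w j) _ (Hws j)).
  assert (Series (fun l => Lterm a b d1 d2 x j l) = Series (Lterm a b d1 d2 x j)) as -> by reflexivity. ring. }
assert (HSC0 : forall j, 0 <= SC j <= P1 j).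
{ intros j. split.
  - apply Series_ge0; auto. intros l; left; apply Hc.
  - assert (0 <= Series (fun l => Lterm a b d1 d2 x j l)).
    { apply Series_ge0; auto. intros l. rewrite HL. specialize (HI j l). specialize (Hw j l). nra. }
    rewrite HSC in H. lra. }
assert (HSCE : ex_series SC).
{ apply (ex_series_le (V:=R_CompleteNormedModule) _ P1); [| eexists; exact HP1s].
  intros j. unfold norm; simpl. specialize (HSC0 j). rewrite Rabs_pos_eq; lra. }
assert (HB : dncbeta_cdf a b d1 d2 x = 1 - Series SC).
{ unfold dncbeta_cdf. rewrite (Series_ext _ (fun j => P1 j - SC j)) by apply HSC.
  rewrite Series_minus by (auto; eexists; exact HP1s).
  rewrite (is_series_unique _ _ HP1s). reflexivity. }
set (TW := fsum l1 (fun l => fsum (m l) (fun j => w j l))).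
set (TC := fsum l1 (fun l => fsum (m l) (fun j => c j l))).
assert (HBh : Bhat = TW - TC).
{ unfold Bhat, TW, TC. rewrite <- fsum_minus. apply fsum_ext. intros l _.
  rewrite <- fsum_minus. apply fsum_ext. intros j _. unfold c. ring. }
assert (HU : U2 = 1 - TW).
{ unfold U2, TW. f_equal. rewrite <- fsum_scal. apply fsum_ext. intros l _.
  rewrite <- fsum_scal. rewrite <- fsum_scal. apply fsum_ext. intros j _.
  unfold w, P1, P2. replace (- (d1 + d2)) with (- d1 + - d2) by ring. rewrite exp_plus.
  field. split; apply not_0_INR, fact_neq_0. }
split.
- rewrite HB, HBh, HU.
  assert (TC < Series SC); [|lra].
  set (J0 := S (mx m l1)).
  apply Rle_lt_trans with (fsum J0 (fun j => fsum l1 (fun l => c j l))).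
  { rewrite fsum_swap. apply fsum_le. intros l Hl. apply fsum_mono_n.
    - unfold J0. pose proof (mx_ge m l1 l Hl). lia.
    - intros j; left; apply Hc. }
  apply Rlt_le_trans with (fsum J0 SC).
  + apply fsum_lt_first; [unfold J0; lia| |].
    * apply Rlt_le_trans with (fsum (S l1) (fun l => c 0%nat l)).
      -- simpl. pose proof (proj1 (Hc 0%nat l1)). lra.
      -- apply fsum_le_Series; auto. intros l; left; apply Hc.
    * intros j _. apply fsum_le_Series; auto. intros l; left; apply Hc.
  + apply fsum_le_Series; auto. intros j; apply HSC0.
- rewrite HU.
  assert (E1 : exp (- d2) * fsum l1 (fun l => d2 ^ l / INR (fact l)) = fsum l1 P2)
    by (rewrite <- fsum_scal; reflexivity).
  assert (E2 : forall l, exp (- d1) * fsum (m l) (fun j => d1 ^ j / INR (fact j)) = fsum (m l) P1)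
    by (intros; rewrite <- fsum_scal; reflexivity).
  assert (Hlt : fsum l1 (fun l => P2 l * (1 - fsum (m l) P1)) < INR l1 * e22).
  { apply fsum_lt_const; auto. intros l Hl. specialize (H2 l Hl). rewrite E2 in H2. exact H2. }
  assert (E3 : fsum l1 (fun l => P2 l * (1 - fsum (m l) P1)) = fsum l1 P2 - TW).
  { unfold TW. rewrite <- fsum_minus. apply fsum_ext. intros l _.
    replace (fsum (m l) (fun j => w j l)) with (P2 l * fsum (m l) P1). ring.
    rewrite <- fsum_scal. apply fsum_ext. intros j _. unfold w. ring. }
  rewrite E1 in H1. lra.
Qed.
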